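(* Let $f:A\to B$ be a ring homomorphism, $\mathfrak b$ an ideal of $B$, and $A\bowtie^f\mathfrak b:=\{(a,f(a)+b): a\in A,\ b\in\mathfrak b\}\subseteq A\times B$. For a maximal ideal $\mathfrak m$ of $A$ let $S_{\mathfrak m}:=f(A\setminus\mathfrak m)+\mathfrak b$, $\mathfrak b_{S_{\mathfrak m}}:=\mathfrak bB_{S_{\mathfrak m}}$, and $f_{\mathfrak m}:A_{\mathfrak m}\to B_{S_{\mathfrak m}}$ the ring homomorphism induced by $f$ ($a/s\mapsto f(a)/f(s)$). Assume that for every maximal ideal $\mathfrak m$ of $A$ containing $f^{-1}(\mathfrak b)$, either $f_{\mathfrak m}$ is surjective or $f^{-1}(\mathfrak b)A_{\mathfrak m}\neq\{0\}$. Then the following are equivalent: (i) $A\bowtie^f\mathfrak b$ is an arithmetical ring; (ii) $A$ is an arithmetical ring, $\mathfrak b_{S_{\mathfrak m}}=\{0\}$ for every maximal ideal $\mathfrak m$ of $A$ containing $f^{-1}(\mathfrak b)$, and for every maximal ideal $\mathfrak n$ of $B$ not containing $\mathfrak b$ the set of all ideals of $B_{\mathfrak n}$ is totally ordered by inclusion.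
   Context: All rings are commutative with identity. $S_{\mathfrak m}$ is a multiplicative subset of $B$ and $B_{S_{\mathfrak m}}$ the localization (possibly zero). A ring is arithmetical if every finitely generated ideal is locally principal. *)

(* Defs.v *)
From HB Require Import structures.
From mathcomp Require Import all_boot all_algebra generic_quotient.
From mathcomp Require Import boolp.
From mathcomp Require Import ring.
Set Implicit Arguments. Unset Strict Implicit. Unset Printing Implicit Defensive.
Import GRing.Theory.
Local Open Scope ring_scope.
Local Open Scope quotient_scope.

Definition mulclos (R : comPzRingType) (S : R -> Prop) (x : R) : Prop :=
  exists s : seq R, (forall y, y \in s -> S y) /\ x = \prod_(y <- s) y.

Section Localization.
Variables (R : comPzRingType) (S : R -> Prop).

Definition Smc : pred R := fun x => `[< mulclos S x >].

Lemma Smc1 : Smc 1.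
Proof. by apply/asboolP; exists [::]; rewrite big_nil. Qed.

Lemma SmcM x y : Smc x -> Smc y -> Smc (x * y).
Proof.
move=> /asboolP [s [Hs ->]] /asboolP [t [Ht ->]]; apply/asboolP.
exists (s ++ t); split; last by rewrite big_cat.
by move=> z; rewrite mem_cat => /orP [/Hs|/Ht].
Qed.

Definition frac := {p : R * R | Smc p.2}.
Definition fnum (x : frac) := (val x).1.
Definition fden (x : frac) := (val x).2.
Lemma fdenP (x : frac) : Smc (fden x). Proof. exact: valP x. Qed.

Definition fequiv (x y : frac) : bool :=
  `[< exists2 u, Smc u & u * (fnum x * fden y - fnum y * fden x) = 0 >].

Lemma fequiv_is_equiv : equiv_class_of fequiv.
Proof.
split=> [x|x y|y x z].
- by apply/asboolP; exists 1; [exact: Smc1|ring].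
- apply/asboolP/asboolP => -[u Hu E]; exists u => //;
  by rewrite -[LHS]opprK -mulrN opprB E oppr0.
- move=> /asboolP [u Hu E1] /asboolP [v Hv E2]; apply/asboolP.
  exists (u * v * fden y); first by rewrite !SmcM ?fdenP.
  have -> : u * v * fden y * (fnum x * fden z - fnum z * fden x) =
    v * fden z * (u * (fnum x * fden y - fnum y * fden x)) +
    u * fden x * (v * (fnum y * fden z - fnum z * fden y)) by ring.
  by rewrite E1 E2 !mulr0 addr0.
Qed.

Canonical fequiv_equiv := EquivRelPack fequiv_is_equiv.
Canonical fequiv_encModRel := defaultEncModRel fequiv.

Definition localization := {eq_quot fequiv}.
HB.instance Definition _ : EqQuotient frac fequiv localization :=
  EqQuotient.on localization.
HB.instance Definition _ := Choice.on localization.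

Definition mkfrac a s (hs : Smc s) : frac := exist _ (a, s) hs.
Definition fzero : frac := mkfrac 0 Smc1.
Definition fone : frac := mkfrac 1 Smc1.
Definition fopp (x : frac) : frac := mkfrac (- fnum x) (fdenP x).
Definition fadd (x y : frac) : frac :=
  mkfrac (fnum x * fden y + fnum y * fden x) (SmcM (fdenP x) (fdenP y)).
Definition fmul (x y : frac) : frac :=
  mkfrac (fnum x * fnum y) (SmcM (fdenP x) (fdenP y)).

Lemma fequivE x y : fequiv x y = (x == y %[mod localization]).
Proof. by rewrite piE. Qed.

Lemma fequiv_repr x : fequiv x (repr (\pi_localization x)).
Proof. by rewrite fequivE reprK. Qed.

Lemma pi_eq x y : fnum x * fden y = fnum y * fden x ->
  \pi_localization x = \pi_localization y.
Proof.
move=> E; apply/eqP; rewrite piE; apply/asboolP; exists 1; first exact: Smc1.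
by rewrite E subrr mulr0.
Qed.

Definition lzero : localization := lift_cst localization fzero.
Definition lone : localization := lift_cst localization fone.
Definition lopp := lift_op1 localization fopp.
Definition ladd := lift_op2 localization fadd.
Definition lmul := lift_op2 localization fmul.
Canonical pi_lzero_morph := PiConst lzero.
Canonical pi_lone_morph := PiConst lone.

Lemma pi_lopp : {morph \pi : x / fopp x >-> lopp x}.
Proof.
move=> x; unlock lopp; apply/eqP; rewrite piE.
have /asboolP [u Hu E] := fequiv_repr x; apply/asboolP; exists u => //.
rewrite /fopp /fnum /fden /=; rewrite /fnum /fden in E.
set a := (val x).1 in E *; set s := (val x).2 in E *.
set a' := (val _).1 in E *; set s' := (val _).2 in E *.
have -> : u * (- a * s' - - a' * s) = - (u * (a * s' - a' * s)) by ring.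
by rewrite E oppr0.
Qed.
Canonical pi_lopp_morph := PiMorph1 pi_lopp.

Lemma pi_ladd : {morph \pi : x y / fadd x y >-> ladd x y}.
Proof.
move=> x y; unlock ladd; apply/eqP; rewrite piE.
set x' := repr _; set y' := repr _.
have /asboolP [u Hu E1] := fequiv_repr x.
have /asboolP [v Hv E2] := fequiv_repr y.
fold x' in E1; fold y' in E2.
apply/asboolP; exists (u * v); first exact: SmcM.
rewrite /fadd /fnum /fden /=; rewrite /fnum /fden in E1 E2.
have -> : u * v * (((val x).1 * (val y).2 + (val y).1 * (val x).2) *
     ((val x').2 * (val y').2) -
   ((val x').1 * (val y').2 + (val y').1 * (val x').2) * ((val x).2 * (val y).2)) =
   v * (val y).2 * (val y').2 * (u * ((val x).1 * (val x').2 - (val x').1 * (val x).2)) +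
   u * (val x).2 * (val x').2 * (v * ((val y).1 * (val y').2 - (val y').1 * (val y).2))
  by ring.
by rewrite E1 E2 !mulr0 addr0.
Qed.
Canonical pi_ladd_morph := PiMorph2 pi_ladd.

Lemma pi_lmul : {morph \pi : x y / fmul x y >-> lmul x y}.
Proof.
move=> x y; unlock lmul; apply/eqP; rewrite piE.
set x' := repr _; set y' := repr _.
have /asboolP [u Hu E1] := fequiv_repr x.
have /asboolP [v Hv E2] := fequiv_repr y.
fold x' in E1; fold y' in E2.
apply/asboolP; exists (u * v); first exact: SmcM.
rewrite /fmul /fnum /fden /=; rewrite /fnum /fden in E1 E2.
have -> : u * v * ((val x).1 * (val y).1 * ((val x').2 * (val y').2) -
   (val x').1 * (val y').1 * ((val x).2 * (val y).2)) =
   v * (val y).1 * (val y').2 * (u * ((val x).1 * (val x').2 - (val x').1 * (val x).2)) +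
   u * (val x').1 * (val x).2 * (v * ((val y).1 * (val y').2 - (val y').1 * (val y).2))
  by ring.
by rewrite E1 E2 !mulr0 addr0.
Qed.
Canonical pi_lmul_morph := PiMorph2 pi_lmul.

Lemma laddA : associative ladd.
Proof.
move=> x y z; rewrite -[x]reprK -[y]reprK -[z]reprK !piE.
by apply: pi_eq; rewrite /fadd /fmul /fopp /fzero /fone /mkfrac /fnum /fden /=; ring.
Qed.
Lemma laddC : commutative ladd.
Proof.
move=> x y; rewrite -[x]reprK -[y]reprK !piE.
by apply: pi_eq; rewrite /fadd /fmul /fopp /fzero /fone /mkfrac /fnum /fden /=; ring.
Qed.
Lemma ladd0 : left_id lzero ladd.
Proof.
move=> x; rewrite -[x]reprK !piE.
by apply: pi_eq; rewrite /fadd /fmul /fopp /fzero /fone /mkfrac /fnum /fden /=; ring.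
Qed.
Lemma laddN : left_inverse lzero lopp ladd.
Proof.
move=> x; rewrite -[x]reprK !piE.
by apply: pi_eq; rewrite /fadd /fmul /fopp /fzero /fone /mkfrac /fnum /fden /=; ring.
Qed.

HB.instance Definition _ := GRing.isZmodule.Build localization laddA laddC ladd0 laddN.

Lemma lmulA : associative lmul.
Proof.
move=> x y z; rewrite -[x]reprK -[y]reprK -[z]reprK !piE.
by apply: pi_eq; rewrite /fadd /fmul /fopp /fzero /fone /mkfrac /fnum /fden /=; ring.
Qed.
Lemma lmulC : commutative lmul.
Proof.
move=> x y; rewrite -[x]reprK -[y]reprK !piE.
by apply: pi_eq; rewrite /fadd /fmul /fopp /fzero /fone /mkfrac /fnum /fden /=; ring.
Qed.
Lemma lmul1 : left_id lone lmul.
Proof.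
move=> x; rewrite -[x]reprK !piE.
by apply: pi_eq; rewrite /fadd /fmul /fopp /fzero /fone /mkfrac /fnum /fden /=; ring.
Qed.
Lemma lmulDl : left_distributive lmul ladd.
Proof.
move=> x y z; rewrite -[x]reprK -[y]reprK -[z]reprK !piE.
by apply: pi_eq; rewrite /fadd /fmul /fopp /fzero /fone /mkfrac /fnum /fden /=; ring.
Qed.

HB.instance Definition _ := GRing.Zmodule_isComPzRing.Build localization
  lmulA lmulC lmul1 lmulDl.

Definition locmap (a : R) : localization := \pi_localization (mkfrac a Smc1).

End Localization.

(* (If f(s) is not an admissible denominator -- which never happens when f  *)
(* maps the denominators of SA into the multiplicative closure of SB -- a    *)
(* junk value 0 is used.)                                                   *)
Definition locind (A B : comPzRingType) (f : A -> B) (SA : A -> Prop)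
  (SB : B -> Prop) (x : localization SA) : localization SB :=
  \pi_(localization SB)
    (insubd (fzero SB) (f (fnum (repr x)), f (fden (repr x)))).

Definition is_ideal (R : comPzRingType) (I : R -> Prop) : Prop :=
  [/\ I 0, (forall x y, I x -> I y -> I (x + y)) & (forall a x, I x -> I (a * x))].

Definition maximal_ideal (R : comPzRingType) (m : R -> Prop) : Prop :=
  [/\ is_ideal m, ~ m 1 &
      forall J : R -> Prop, is_ideal J -> (forall x, m x -> J x) ->
        J 1 \/ (forall x, J x -> m x)].

Definition ideal_gen (R : comPzRingType) (X : R -> Prop) (x : R) : Prop :=
  forall J : R -> Prop, is_ideal J -> (forall y, X y -> J y) -> J x.

Definition fin_gen (R : comPzRingType) (I : R -> Prop) : Prop :=
  exists s : seq R, forall x, I x <-> ideal_gen (fun y => y \in s) x.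

Definition principal (R : comPzRingType) (I : R -> Prop) : Prop :=
  exists g : R, forall x, I x <-> exists r, x = r * g.

Definition ext_ideal (R : comPzRingType) (S : R -> Prop) (I : R -> Prop) :
  localization S -> Prop :=
  ideal_gen (fun y => exists2 x, I x & y = locmap S x).

Arguments ext_ideal {R} S I _.
Arguments locind {A B} f SA SB x.

Definition compl (R : Type) (m : R -> Prop) : R -> Prop := fun x => ~ m x.

Definition locally_principal (R : comPzRingType) (I : R -> Prop) : Prop :=
  forall m : R -> Prop, maximal_ideal m -> principal (ext_ideal (compl m) I).

Definition arithmetical (R : comPzRingType) : Prop :=
  forall I : R -> Prop, is_ideal I -> fin_gen I -> locally_principal I.

Record ideal_of (R : comPzRingType) := IdealOf {
  ideal_set :> R -> Prop;
  ideal_ofP : is_ideal ideal_set }.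

Section Amalgamation.
Variables (A B : comPzRingType) (f : {rmorphism A -> B}) (b : ideal_of B).

Definition amalgP : pred (A * B) := fun p => `[< b (p.2 - f p.1) >].

Lemma amalg_closed : subring_closed amalgP.
Proof.
have [b0 bD bM] := ideal_ofP b.
have bN x : b x -> b (- x) by move=> /(bM (-1)); rewrite mulN1r.
split; rewrite /amalgP.
- by apply/asboolP; rewrite /= rmorph1 subrr.
- move=> x y /asboolP hx /asboolP hy; apply/asboolP => /=.
  have -> : x.2 - y.2 - f (x.1 - y.1) = (x.2 - f x.1) + - (y.2 - f y.1).
    by rewrite rmorphB; ring.
  exact: bD (bN _ hy).
- move=> x y /asboolP hx /asboolP hy; apply/asboolP => /=.
  have -> : x.2 * y.2 - f (x.1 * y.1) = y.2 * (x.2 - f x.1) + f x.1 * (y.2 - f y.1).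
    by rewrite rmorphM; ring.
  exact: bD (bM _ _ hx) (bM _ _ hy).
Qed.

Definition amalgamation := {p : A * B | amalgP p}.
HB.instance Definition _ := [isSub for @proj1_sig (A * B) amalgP : amalgamation -> A * B].
HB.instance Definition _ := [Choice of amalgamation by <:].
HB.instance Definition _ :=
  GRing.SubChoice_isSubComPzRing.Build _ _ amalgamation amalg_closed.

End Amalgamation.

Definition Sm (A B : comPzRingType) (f : {rmorphism A -> B}) (b : B -> Prop)
  (m : A -> Prop) : B -> Prop :=
  fun y => exists2 a, ~ m a & exists2 c, b c & y = f a + c.

(* Main.v *)
Require Import Defs.
From HB Require Import structures.
From mathcomp Require Import all_boot all_algebra generic_quotient boolp.
From mathcomp Require Import ring.
Set Implicit Arguments. Unset Strict Implicit. Unset Printing Implicit Defensive.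
Import GRing.Theory.
Local Open Scope ring_scope.
Local Open Scope quotient_scope.

Section Gen.
Variable R : comPzRingType.

Lemma ideal_genP (X : R -> Prop) : is_ideal (ideal_gen X).
Proof.
split.
- by move=> J [J0 _ _].
- by move=> x y Hx Hy J HJ HX; case: (HJ) => _ JD _; apply: JD; [apply: Hx|apply: Hy].
- by move=> a x Hx J HJ HX; case: (HJ) => _ _ JM; apply: JM; apply: Hx.
Qed.

Lemma ideal_gen_sub (X : R -> Prop) x : X x -> ideal_gen X x.
Proof. by move=> Hx J _ HX; apply: HX. Qed.

Lemma idealN (I : R -> Prop) x : is_ideal I -> I x -> I (- x).
Proof. by case=> _ _ IM /(IM (-1)); rewrite mulN1r. Qed.

Lemma max_comax (m : R -> Prop) a : maximal_ideal m -> ~ m a ->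
  exists mm r, m mm /\ 1 = mm + r * a.
Proof.
case=> [[m0 mD mM] m1 mmax] ma.
pose J := fun z => exists mm r, m mm /\ z = mm + r * a.
have HJ : is_ideal J.
  split.
  - by exists 0, 0; split => //; rewrite mul0r addr0.
  - move=> x y [u [r [mu ->]]] [v [s [mv ->]]].
    by exists (u + v), (r + s); split; [exact: mD|ring].
  - move=> c x [u [r [mu ->]]].
    by exists (c * u), (c * r); split; [exact: mM|ring].
have /mmax [] : forall x, m x -> J x.
  by move=> x mx; exists x, 0; split => //; rewrite mul0r addr0.
- by [].
- by move=> [mm [r [H1 H2]]]; exists mm, r.
- by move=> /(_ a) H; exfalso; apply: ma; apply: H; exists 0, 1; split => //; ring.
Qed.

Lemma max_prime (m : R -> Prop) x y : maximal_ideal m -> m (x * y) -> m x \/ m y.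
Proof.
move=> Hm mxy; case: (pselect (m x)) => mx; [by left|right].
have [mm [r [Hmm E]]] := max_comax Hm mx.
case: Hm => [[m0 mD mM] _ _].
have -> : y = mm * y + r * (x * y) by rewrite mulrA -mulrDl -E mul1r.
by apply: mD; [rewrite mulrC|]; apply: mM.
Qed.

Lemma max_not1 (m : R -> Prop) : maximal_ideal m -> ~ m 1.
Proof. by case. Qed.

Lemma Smc_sub (S : R -> Prop) x : S x -> Smc S x.
Proof. by move=> Sx; apply/asboolP; exists [:: x]; split; [move=> y; rewrite inE => /eqP ->|rewrite big_seq1]. Qed.

Lemma Smc_compl (m : R -> Prop) z : maximal_ideal m -> Smc (compl m) z <-> ~ m z.
Proof.
move=> Hm; split; last exact: Smc_sub.
move=> /asboolP [s [Hs ->]]; elim: s Hs => [|x s IH] Hs.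
  by rewrite big_nil; exact: max_not1.
rewrite big_cons => /(max_prime Hm) [].
  by apply: Hs; rewrite inE eqxx.
by apply: IH => y ys; apply: Hs; rewrite inE ys orbT.
Qed.

Lemma SmcM' (S : R -> Prop) x y : Smc S x -> Smc S y -> Smc S (x * y).
Proof. exact: SmcM. Qed.
End Gen.

Section Loc.
Variables (R : comPzRingType) (S : R -> Prop).
Local Notation L := (localization S).

Lemma pi1 : (1 : L) = \pi_L (fone S).
Proof. by rewrite /= /GRing.one /=; unlock lone. Qed.
Lemma pi0 : (0 : L) = \pi_L (fzero S).
Proof. by rewrite /GRing.zero /=; unlock lzero. Qed.
Lemma piM x y : \pi_L x * \pi_L y = \pi_L (fmul x y).
Proof. exact: (esym (pi_lmul _ _)). Qed.
Lemma piD x y : \pi_L x + \pi_L y = \pi_L (fadd x y).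
Proof. exact: (esym (pi_ladd _ _)). Qed.
Lemma piN x : - \pi_L x = \pi_L (fopp x).
Proof. exact: (esym (pi_lopp _)). Qed.
Lemma pi_eqP (x y : Defs.frac S) : \pi_L x = \pi_L y <->
  exists2 u, Smc S u & u * (fnum x * fden y - fnum y * fden x) = 0.
Proof.
split.
- by move/eqP; rewrite -fequivE => /asboolP.
- by move=> H; apply/eqP; rewrite -fequivE; apply/asboolP.
Qed.

Ltac fr := rewrite /fadd /fmul /fopp /fzero /fone /mkfrac /fnum /fden /=.

Lemma locmapM x y : locmap S (x * y) = locmap S x * locmap S y.
Proof. by rewrite /locmap piM; apply: pi_eq; fr; ring. Qed.
Lemma locmapD x y : locmap S (x + y) = locmap S x + locmap S y.
Proof. by rewrite /locmap piD; apply: pi_eq; fr; ring. Qed.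
Lemma locmap0 : locmap S 0 = 0.
Proof. by rewrite /locmap pi0; apply: pi_eq; fr; ring. Qed.
Lemma locmap1 : locmap S 1 = 1.
Proof. by rewrite /locmap pi1; apply: pi_eq; fr; ring. Qed.

Lemma pi_den (p : Defs.frac S) : \pi_L p * locmap S (fden p) = locmap S (fnum p).
Proof. by rewrite /locmap piM; apply: pi_eq; fr; ring. Qed.

Lemma lm_dvd t x r y : Smc S t -> t * x = r * y ->
  exists z, locmap S x = z * locmap S y.
Proof.
move=> Ht E; exists (\pi_L (mkfrac r Ht)); rewrite /locmap piM.
apply/pi_eqP; exists 1; first exact: Smc1.
have E' : t * x - r * y = 0 by rewrite E subrr.
by fr; rewrite -E'; ring.
Qed.

Lemma lm_dvd_inv x z y : locmap S x = z * locmap S y ->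
  exists t r, Smc S t /\ t * x = r * y.
Proof.
rewrite -[z]reprK /locmap piM => /pi_eqP [u Hu E].
exists (u * fden (repr z)), (u * fnum (repr z)); split.
  by apply: SmcM => //; exact: fdenP.
move: E; fr; move=> E; apply/eqP; rewrite -subr_eq0 -E; apply/eqP; ring.
Qed.

Lemma locmap_eq0 x : locmap S x = 0 <-> exists2 u, Smc S u & u * x = 0.
Proof.
rewrite pi0 /locmap; split.
- move=> /pi_eqP [u Hu E]; exists u => //; rewrite -E; fr; ring.
- move=> [u Hu E]; apply/pi_eqP; exists u => //; rewrite -E; fr; ring.
Qed.
End Loc.

Ltac fr := rewrite /fadd /fmul /fopp /fzero /fone /mkfrac /fnum /fden /=.

Definition LCm (R : comPzRingType) (m : R -> Prop) := forall x y : R,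
  (exists t r, ~ m t /\ t * x = r * y) \/ (exists t r, ~ m t /\ t * y = r * x).

Lemma ideal_min (R : comPzRingType) (X J : R -> Prop) x : is_ideal J -> (forall y, X y -> J y) ->
  ideal_gen X x -> J x.
Proof. by move=> HJ HX Hx; apply: Hx. Qed.

Section Arith.
Variable R : comPzRingType.

Lemma loc_unit (m : R -> Prop) (z : localization (compl m)) : maximal_ideal m ->
  (exists w, z * w = 1) \/ (exists w, (1 - z) * w = 1).
Proof.
move=> Hm; rewrite -[z]reprK; set p := repr z.
have ns : ~ m (fden p) by apply/(Smc_compl _ Hm); exact: fdenP.
case: (pselect (m (fnum p))) => ma.
- right.
  have H : compl m (fden p - fnum p).
    move=> H; apply: ns; have [[_ mD _] _ _] := Hm.
    by rewrite -[fden p](subrK (fnum p)); apply: mD.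
  exists (\pi_(localization (compl m)) (mkfrac (fden p) (Smc_sub H))).
  rewrite pi1 piN piD piM; apply: pi_eq; fr; ring.
- left; exists (\pi_(localization (compl m)) (mkfrac (fden p) (Smc_sub ma))).
  rewrite pi1 piM; apply: pi_eq; fr; ring.
Qed.

Lemma ext2 (S : R -> Prop) x y z :
  ext_ideal S (ideal_gen (fun w => w \in [:: x; y])) z ->
  exists a b, z = a * locmap S x + b * locmap S y.
Proof.
apply: (ideal_min (J := fun z => exists a b, z = a * locmap S x + b * locmap S y)).
  split.
  - by exists 0, 0; rewrite !mul0r addr0.
  - move=> u v [a [b ->]] [c [d ->]]; exists (a + c), (b + d); ring.
  - move=> c u [a [b ->]]; exists (c * a), (c * b); ring.
move=> w [i Hi ->].
pose K := fun i => exists a b, locmap S i = a * locmap S x + b * locmap S y.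
apply: (ideal_min (J := K)) Hi.
  split.
  - by exists 0, 0; rewrite locmap0 !mul0r addr0.
  - move=> u v [a [b E1]] [c [d E2]]; exists (a + c), (b + d).
    by rewrite locmapD E1 E2; ring.
  - move=> c u [a [b E1]]; exists (locmap S c * a), (locmap S c * b).
    by rewrite locmapM E1; ring.
move=> u; rewrite !inE => /orP [] /eqP ->.
- by exists 1, 0; ring.
- by exists 0, 1; ring.
Qed.

Lemma arith_LC : arithmetical R -> forall m : R -> Prop, maximal_ideal m -> LCm m.
Proof.
move=> HA m Hm x y.
pose I := ideal_gen (fun z => z \in [:: x; y]).
have fgI : fin_gen I by exists [:: x; y].
have [g Hg] := HA I (ideal_genP _) fgI m Hm.
have Ix : I x by apply: ideal_gen_sub; rewrite inE eqxx.
have Iy : I y by apply: ideal_gen_sub; rewrite !inE eqxx orbT.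
have [r1 E1] := (Hg (locmap _ x)).1 (ideal_gen_sub (ex_intro2 _ _ x Ix erefl)).
have [r2 E2] := (Hg (locmap _ y)).1 (ideal_gen_sub (ex_intro2 _ _ y Iy erefl)).
have [a [b Eg]] := ext2 ((Hg g).2 (ex_intro _ 1 (esym (mul1r g)))).
have Egt : g = (a * r1 + b * r2) * g by rewrite {1}Eg E1 E2; ring.
have key : (exists z, locmap (compl m) y = z * locmap _ x) \/
           (exists z, locmap (compl m) x = z * locmap _ y).
  case: (loc_unit (a * r1 + b * r2) Hm) => [[w Hw]|[w Hw]]; last first.
    have g0 : g = 0.
      have E0 : (1 - (a * r1 + b * r2)) * g = 0 by rewrite mulrBl mul1r -Egt subrr.
      have -> : g = w * ((1 - (a * r1 + b * r2)) * g).
        by rewrite mulrA [w * _]mulrC Hw mul1r.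
      by rewrite E0 mulr0.
    by right; exists 0; rewrite E1 g0 mulr0 mul0r.
  case: (loc_unit (a * r1 * w) Hm) => [[w' Hw']|[w' Hw']].
    left; exists (r2 * (a * w * w')); rewrite E2 E1.
    rewrite {1}(_ : g = (a * r1 * w * w') * g); first ring.
    by rewrite Hw' mul1r.
  right; exists (r1 * (b * w * w')); rewrite E2 E1.
  have E3 : 1 - a * r1 * w = b * r2 * w by rewrite -Hw; ring.
  rewrite {1}(_ : g = ((b * r2 * w) * w') * g); first ring.
  by rewrite -E3 Hw' mul1r.
case: key => [[z Ez]|[z Ez]].
- right; have [t [r [Ht E]]] := lm_dvd_inv Ez.
  by exists t, r; split => //; apply/(Smc_compl _ Hm).
- left; have [t [r [Ht E]]] := lm_dvd_inv Ez.
  by exists t, r; split => //; apply/(Smc_compl _ Hm).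
Qed.

Lemma LC_arith : (forall m : R -> Prop, maximal_ideal m -> LCm m) -> arithmetical R.
Proof.
move=> HLC I HI [s Hs] m Hm.
have Is : forall y, y \in s -> I y by move=> y ys; apply/Hs; apply: ideal_gen_sub.
have [g [Ig Hg]] : exists g, I g /\
    forall y, y \in s -> exists t r, ~ m t /\ t * y = r * g.
  elim: s {Hs} Is => [|x s IH] Is.
    by exists 0; split => //; case: HI.
  have [|g [Ig Hg]] := IH.
    by move=> y ys; apply: Is; rewrite inE ys orbT.
  have Ix : I x by apply: Is; rewrite inE eqxx.
  case: (HLC m Hm x g) => [[t [r [Ht E]]]|[t [r [Ht E]]]].
  - exists g; split => // y; rewrite inE => /orP [/eqP ->|ys]; first by exists t, r.
    exact: Hg.
  - exists x; split => // y; rewrite inE => /orP [/eqP ->|ys].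
      by exists 1, 1; split; [exact: max_not1|ring].
    have [t' [r' [Ht' E']]] := Hg y ys.
    exists (t * t'), (r' * r); split.
      by move=> /(max_prime Hm) [].
    by rewrite -mulrA E' mulrCA E; ring.
exists (locmap _ g) => z; split; last first.
  move=> [r ->]; case: (ideal_genP (fun y => exists2 x, I x & y = locmap (compl m) x))
     => _ _ HM; apply: HM; apply: ideal_gen_sub; by exists g.
apply: (ideal_min (J := fun z => exists r, z = r * locmap (compl m) g)).
  split.
  - by exists 0; rewrite mul0r.
  - by move=> u v [r ->] [r' ->]; exists (r + r'); ring.
  - by move=> c u [r ->]; exists (c * r); ring.
move=> w [i Hi ->].
pose K := fun i => exists r, locmap (compl m) i = r * locmap _ g.
apply: (ideal_min (J := K)) (proj1 (Hs i) Hi).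
  split.
  - by exists 0; rewrite locmap0 mul0r.
  - by move=> u v [r E1] [r' E2]; exists (r + r'); rewrite locmapD E1 E2; ring.
  - by move=> c u [r E1]; exists (locmap _ c * r); rewrite locmapM E1; ring.
move=> y ys; have [t [r [Ht E]]] := Hg y ys.
by apply: (lm_dvd (t := t) (r := r)) => //; apply/(Smc_compl _ Hm).
Qed.

Definition chained (n : R -> Prop) := forall I J : localization (compl n) -> Prop,
  is_ideal I -> is_ideal J -> (forall x, I x -> J x) \/ (forall x, J x -> I x).

Lemma pi_locmap (S : R -> Prop) (p : Defs.frac S) :
  locmap S (fnum p) = locmap S (fden p) * \pi_(localization S) p.
Proof. by rewrite mulrC pi_den. Qed.

Lemma chained_LC n : maximal_ideal n -> chained n <-> LCm n.
Proof.
move=> Hn; split.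
- move=> Hc x y.
  pose I := fun z : localization (compl n) => exists r, z = r * locmap _ x.
  pose J := fun z : localization (compl n) => exists r, z = r * locmap _ y.
  have idl w : is_ideal (fun z : localization (compl n) => exists r, z = r * w).
    split.
    - by exists 0; rewrite mul0r.
    - by move=> u v [r ->] [r' ->]; exists (r + r'); ring.
    - by move=> c u [r ->]; exists (c * r); ring.
  case: (Hc I J (idl _) (idl _)) => H.
  + have [z Ez] := H (locmap _ x) (ex_intro _ 1 (esym (mul1r _))).
    have [t [r [Ht E]]] := lm_dvd_inv Ez.
    by left; exists t, r; split => //; apply/(Smc_compl _ Hn).
  + have [z Ez] := H (locmap _ y) (ex_intro _ 1 (esym (mul1r _))).
    have [t [r [Ht E]]] := lm_dvd_inv Ez.
    by right; exists t, r; split => //; apply/(Smc_compl _ Hn).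
- move=> HLC I J HI HJ.
  case: (pselect (forall x, I x -> J x)) => HIJ; [by left|right].
  have [u [Iu Ju]] : exists u, I u /\ ~ J u.
    apply: contra_notP HIJ => H x Ix; apply: contra_notP H => Jx.
    by exists x.
  move=> v Jv.
  rewrite -[u]reprK in Iu Ju; rewrite -[v]reprK in Jv *.
  set p := repr u in Iu Ju; set q := repr v in Jv *.
  case: (HLC (fnum p) (fnum q)) => [[t [r [Ht E]]]|[t [r [Ht E]]]].
  + exfalso; apply: Ju.
    have Ht' : Smc (compl n) (t * fden p).
      by apply: SmcM; [exact: Smc_sub|exact: fdenP].
    have -> : \pi_(localization (compl n)) p =
       (\pi_(localization (compl n)) (mkfrac r Ht') * locmap _ (fden q)) *
         \pi_(localization (compl n)) q.
      rewrite /locmap !piM; apply: pi_eq; move: E; fr => E.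
      rewrite (_ : (sval p).1 * (t * (sval p).2 * 1 * (sval q).2) =
        (t * (sval p).1) * ((sval p).2 * (sval q).2)); last by ring.
      by rewrite E; ring.
    by case: HJ => _ _; apply.
  + have Ht' : Smc (compl n) (t * fden q).
      by apply: SmcM; [exact: Smc_sub|exact: fdenP].
    have -> : \pi_(localization (compl n)) q =
       (\pi_(localization (compl n)) (mkfrac r Ht') * locmap _ (fden p)) *
         \pi_(localization (compl n)) p.
      rewrite /locmap !piM; apply: pi_eq; move: E; fr => E.
      rewrite (_ : (sval q).1 * (t * (sval q).2 * 1 * (sval p).2) =
        (t * (sval q).1) * ((sval q).2 * (sval p).2)); last by ring.
      by rewrite E; ring.
    by case: HI => _ _; apply.
Qed.
End Arith.

Section Am.
Variables (A B : comPzRingType) (f : {rmorphism A -> B}) (b : ideal_of B).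
Local Notation R := (amalgamation f b).
Lemma valM (x y : R) : val (x * y) = val x * val y.
Proof. exact: rmorphM. Qed.
Lemma valD (x y : R) : val (x + y) = val x + val y.
Proof. exact: rmorphD. Qed.
Lemma valB (x y : R) : val (x - y) = val x - val y.
Proof. exact: rmorphB. Qed.
Lemma val1 : val (1 : R) = 1.
Proof. exact: rmorph1. Qed.
Lemma val0 : val (0 : R) = 0.
Proof. exact: rmorph0. Qed.

Lemma b0 : b 0. Proof. by case: (ideal_ofP b). Qed.
Lemma bD x y : b x -> b y -> b (x + y). Proof. by case: (ideal_ofP b) => _ H _; apply: H. Qed.
Lemma bMl a x : b x -> b (a * x). Proof. by case: (ideal_ofP b) => _ _ H; apply: H. Qed.
Lemma bMr a x : b x -> b (x * a). Proof. by rewrite mulrC; apply: bMl. Qed.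
Lemma bN x : b x -> b (- x). Proof. by move=> /(bMl (-1)); rewrite mulN1r. Qed.
Lemma bB x y : b x -> b y -> b (x - y). Proof. by move=> Hx Hy; apply: bD => //; apply: bN. Qed.

Lemma memA (x : R) : b ((val x).2 - f (val x).1).
Proof. by move: (valP x) => /asboolP. Qed.

Definition mkA a c (H : b (c - f a)) : R := Sub (a, c) (asboolT H).
Lemma mkA_val a c (H : b (c - f a)) : val (mkA H) = (a, c).
Proof. by rewrite /mkA SubK. Qed.

Lemma bf0 c : b c -> b (c - f 0). Proof. by rewrite rmorph0 subr0. Qed.
Lemma b0f a : b (f a) -> b (0 - f a). Proof. by rewrite sub0r; apply: bN. Qed.
Lemma bff a : b (f a - f a). Proof. by rewrite subrr; exact: b0. Qed.

Definition mkf a : R := mkA (bff a).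
Definition mkb c (H : b c) : R := mkA (bf0 H).

Lemma R_eq (x y : R) : val x = val y -> x = y. Proof. exact: val_inj. Qed.

Lemma max_liftA (m : A -> Prop) : maximal_ideal m ->
  maximal_ideal (fun X : R => m (val X).1).
Proof.
move=> Hm; have Hm' := Hm; case: Hm' => [[m0 mD mM] m1 _]; split.
- split.
  + by rewrite val0.
  + by move=> x y; rewrite valD; apply: mD.
  + by move=> c x; rewrite valM; apply: mM.
- by rewrite val1.
- move=> J [J0 JD JM] HMJ.
  case: (pselect (forall X, J X -> m (val X).1)) => H; [by right|left].
  have [X [JX nX]] : exists X, J X /\ ~ m (val X).1.
    apply: contra_notP H => H X JX; apply: contra_notP H => nX; by exists X.
  have [mm [r [Hmm E]]] := max_comax Hm nX.
  have -> : (1 : R) = (1 - mkf r * X) + mkf r * X by rewrite subrK.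
  apply: JD; last exact: JM.
  apply: HMJ; rewrite valB valM val1 mkA_val /=.
  by rewrite E addrK.
Qed.

Lemma max_liftB (n : B -> Prop) c0 : maximal_ideal n -> b c0 -> ~ n c0 ->
  maximal_ideal (fun X : R => n (val X).2).
Proof.
move=> Hn bc0 nc0; have Hn' := Hn; case: Hn' => [[n0 nD nM] n1 _]; split.
- split.
  + by rewrite val0.
  + by move=> x y; rewrite valD; apply: nD.
  + by move=> c x; rewrite valM; apply: nM.
- by rewrite val1.
- move=> J [J0 JD JM] HMJ.
  case: (pselect (forall X, J X -> n (val X).2)) => H; [by right|left].
  have [X [JX nX]] : exists X, J X /\ ~ n (val X).2.
    apply: contra_notP H => H X JX; apply: contra_notP H => nX; by exists X.
  have [nu [r [Hnu E]]] := max_comax Hn nX.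
  have [nu' [z [Hnu' E']]] := max_comax Hn nc0.
  have bY : b (z * c0 * r) by rewrite mulrAC; apply: bMl.
  pose Y := mkb bY.
  have -> : (1 : R) = (1 - Y * X) + Y * X by rewrite subrK.
  apply: JD; last exact: JM.
  apply: HMJ; rewrite valB valM val1 mkA_val /=.
  have -> : 1 - z * c0 * r * (val X).2 = nu' + z * c0 * nu.
    have E2 : r * (val X).2 = 1 - nu by rewrite E; ring.
    transitivity (1 - z * c0 * (r * (val X).2)); first ring.
    by rewrite E2 {1}E'; ring.
  by apply: nD => //; apply: nM.
Qed.

Lemma max_downA (M : R -> Prop) : maximal_ideal M ->
  (forall c (H : b c), M (mkb H)) ->
  maximal_ideal (fun a => exists2 X, M X & (val X).1 = a).
Proof.
move=> HM H0; have HM' := HM; case: HM' => [[M0 MD MM] M1 Mmax]; split.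
- split.
  + by exists 0 => //; rewrite val0.
  + by move=> x y [X MX <-] [Y MY <-]; exists (X + Y); [exact: MD|rewrite valD].
  + by move=> c x [X MX <-]; exists (mkf c * X); [exact: MM|rewrite valM mkA_val].
- move=> [X MX X1]; apply: M1.
  have bc : b ((val X).2 - 1).
    by move: (memA X); rewrite X1 rmorph1.
  have -> : (1 : R) = X - mkb bc.
    apply: val_inj; rewrite valB mkA_val val1; move: X1; case: (val X) => x1 x2 /= ->. change (((1 : A), (1 : B)) = ((1 : A) - 0, x2 - (x2 - 1))); congr (_, _); [by rewrite subr0|by rewrite opprB addrC subrK].
  by apply: (MD) => //; apply: (idealN (And3 M0 MD MM)) => //.
- move=> J [J0 JD JM] HJ.
  pose J' := fun X : R => J (val X).1.
  have HJ' : is_ideal J'.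
    split; rewrite /J'.
    + by rewrite val0.
    + by move=> x y; rewrite valD; apply: JD.
    + by move=> c x; rewrite valM; apply: JM.
  case: (Mmax J' HJ').
  + by move=> X MX; apply: HJ; exists X.
  + by rewrite /J' val1; left.
  + move=> HJM; right => a Ja; exists (mkf a); last by rewrite mkA_val.
    by apply: HJM; rewrite /J' mkA_val.
Qed.

Lemma max_downB (M : R -> Prop) c0 (H0 : b c0) : maximal_ideal M -> ~ M (mkb H0) ->
  maximal_ideal (fun z => exists2 X, M X & val X = (0, c0 * z)) /\
  ~ (exists2 X, M X & val X = (0, c0 * c0)).
Proof.
move=> HM nC; have HM' := HM; case: HM' => [[M0 MD MM] M1 Mmax].
pose C := mkb H0.
have bc z : b (c0 * z) by apply: bMr.
have HC : forall X Y, M (X * Y) -> ~ M X -> M Y.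
  by move=> X Y /(max_prime HM) [].
split; last first.
  move=> [X MX EX]; apply: (nC); apply: (HC C C) => //.
  suff -> : C * C = X by [].
  by apply: val_inj; rewrite valM EX mkA_val /=; congr (_, _); rewrite mulr0.
split.
- split.
  + by exists 0 => //; rewrite val0 mulr0.
  + move=> x y [X MX EX] [Y MY EY]; exists (X + Y); first exact: (MD).
    by rewrite valD EX EY /=; congr (_, _); rewrite ?addr0 // mulrDr.
  + move=> z x [X MX EX].
    exists (mkb (bc (z * x))); last by rewrite mkA_val.
    apply: (HC C) => //.
    suff -> : C * mkb (bc (z * x)) = mkb (bc z) * X by apply: (MM).
    apply: val_inj; rewrite !valM EX !mkA_val /=; congr (_, _); rewrite /=.
    ring.
- move=> [X MX EX]; apply: nC.
  suff -> : mkb H0 = X by [].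
  by apply: val_inj; rewrite EX mkA_val mulr1.
- move=> J [J0 JD JM] HJ.
  pose J' := fun X : R => J (val X).2.
  have HJ' : is_ideal J'.
    split; rewrite /J'.
    + by rewrite val0.
    + by move=> x y; rewrite valD; apply: JD.
    + by move=> c x; rewrite valM; apply: JM.
  case: (Mmax J' HJ').
  + move=> X MX; apply: HJ; exists (C * X); first by apply: (MM).
    by rewrite valM mkA_val /=; congr (_, _); rewrite mul0r.
  + by rewrite /J' val1; left.
  + move=> HJM; right => z Jz; exists (mkb (bc z)); last by rewrite mkA_val.
    by apply: HJM; rewrite /J' mkA_val; apply: JM.
Qed.
End Am.

Section Sm.
Variables (A B : comPzRingType) (f : {rmorphism A -> B}) (b : ideal_of B).
Variables (m : A -> Prop) (Hm : maximal_ideal m).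
Local Notation R := (amalgamation f b).
Local Notation S := (Sm f b m).

Lemma Sm_f a : ~ m a -> S (f a).
Proof. by move=> ma; exists a => //; exists 0; [exact: b0|rewrite addr0]. Qed.

Lemma Sm_mul x y : S x -> S y -> S (x * y).
Proof.
move=> [a ma [c bc ->]] [a' ma' [c' bc' ->]].
exists (a * a'); first by move=> /(max_prime Hm) [].
exists (f a * c' + c * f a' + c * c'); last by rewrite rmorphM; ring.
by apply: bD; [apply: bD|]; [apply: bMl|apply: bMr|apply: bMr].
Qed.

Lemma Smc_Sm u : Smc S u -> S u.
Proof.
move=> /asboolP [s [Hs ->]]; elim: s Hs => [|x s IH] Hs.
  by rewrite big_nil -(rmorph1 f); apply: Sm_f; exact: max_not1.
rewrite big_cons; apply: Sm_mul; first by apply: Hs; rewrite inE eqxx.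
by apply: IH => y ys; apply: Hs; rewrite inE ys orbT.
Qed.

Lemma Sm_val (X : R) : ~ m (val X).1 -> S (val X).2.
Proof.
move=> mX; exists (val X).1 => //; exists ((val X).2 - f (val X).1); last by rewrite addrC subrK.
exact: memA.
Qed.
End Sm.

Section Main.
Variables (A B : comPzRingType) (f : {rmorphism A -> B}) (b : ideal_of B).
Local Notation R := (amalgamation f b).

Lemma i_A : (forall M : R -> Prop, maximal_ideal M -> LCm M) ->
  forall m : A -> Prop, maximal_ideal m -> LCm m.
Proof.
move=> HLC m Hm x y.
have HM := max_liftA f b Hm.
case: (HLC _ HM (mkf f b x) (mkf f b y)) => [[t [r [Ht E]]]|[t [r [Ht E]]]].
- left; exists (val t).1, (val r).1; split => //.
  by move: (congr1 (fun Z => (val Z).1) E).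
- right; exists (val t).1, (val r).1; split => //.
  by move: (congr1 (fun Z => (val Z).1) E).
Qed.

Lemma i_B : (forall M : R -> Prop, maximal_ideal M -> LCm M) ->
  forall n : B -> Prop, maximal_ideal n -> ~ (forall y, b y -> n y) -> LCm n.
Proof.
move=> HLC n Hn Hnb x y.
have [c0 [bc0 nc0]] : exists c0, b c0 /\ ~ n c0.
  apply: contra_notP Hnb => H c bc; apply: contra_notP H => nc; by exists c.
have HM := max_liftB f Hn bc0 nc0.
have bx : b (c0 * x) by apply: bMr.
have byy : b (c0 * y) by apply: bMr.
have nt (t : R) : ~ n (val t).2 -> ~ n ((val t).2 * c0) by move=> H /(max_prime Hn) [].
case: (HLC _ HM (mkb f bx) (mkb f byy)) => [[t [r [Ht E]]]|[t [r [Ht E]]]].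
- left; exists ((val t).2 * c0), ((val r).2 * c0); split; first exact: nt.
  move: (congr1 (fun Z => (val Z).2) E) => /= E'.
  by rewrite -!mulrA E'.
- right; exists ((val t).2 * c0), ((val r).2 * c0); split; first exact: nt.
  move: (congr1 (fun Z => (val Z).2) E) => /= E'.
  by rewrite -!mulrA E'.
Qed.

Lemma kill_lemma (m : A -> Prop) : maximal_ideal m ->
  (forall M : R -> Prop, maximal_ideal M -> LCm M) ->
  forall c k, b c -> b (f k) ->
  (exists2 u, Sm f b m u & u * c = 0) \/ (exists2 s, ~ m s & s * k = 0).
Proof.
move=> Hm HLC c k bc bk.
have HM := max_liftA f b Hm.
case: (HLC _ HM (mkb f bc) (mkA (b0f bk))) => [[t [r [Ht E]]]|[t [r [Ht E]]]].
- left; exists (val t).2; first exact: Sm_val.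
  move: (congr1 (fun Z => (val Z).2) E) => /= ->.
  by rewrite mulr0.
- right; exists (val t).1 => //.
  move: (congr1 (fun Z => (val Z).1) E) => /= ->.
  by rewrite mulr0.
Qed.

Lemma i_bS (m : A -> Prop) : maximal_ideal m ->
  (forall M : R -> Prop, maximal_ideal M -> LCm M) ->
  ((forall y : localization (Sm f b m),
        exists x : localization (compl m), locind f (compl m) (Sm f b m) x = y)
     \/ ~ (forall y : localization (compl m),
             ext_ideal (compl m) (fun a => b (f a)) y -> y = 0)) ->
  forall y : localization (Sm f b m), ext_ideal (Sm f b m) b y -> y = 0.
Proof.
move=> Hm HLC Hyp.
suff H : forall c, b c -> exists2 u, Sm f b m u & u * c = 0.
  move=> y0; apply: (ideal_min (J := fun y => y = 0)).
    split => //; first by move=> x y -> ->; rewrite addr0.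
    by move=> a x ->; rewrite mulr0.
  move=> y [c bc ->]; apply/locmap_eq0.
  by have [u Hu E] := H c bc; exists u => //; apply: Smc_sub.
move=> c bc.
case: Hyp => [Hsurj|Hnz].
- have [x Ex] := Hsurj (locmap _ c).
  set p := repr x in Ex.
  have nt : ~ m (fden p) by apply/(Smc_compl _ Hm); exact: fdenP.
  have Hft : Smc (Sm f b m) (f (fden p)) by apply: Smc_sub; apply: Sm_f.
  move: Ex; rewrite /locind -/p /insubd (@insubT _ _ (Defs.frac (Sm f b m)) (f (fnum p), f (fden p)) Hft) /= /locmap.
  move=> /pi_eqP [u /(Smc_Sm Hm) Hu]; rewrite /fnum /fden /= => Eq.
  have Eq' : u * (c * f (fden p)) = u * f (fnum p).
    by apply/eqP; rewrite eq_sym -subr_eq0 -Eq; apply/eqP; rewrite /fnum /fden; ring.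
  case: (Hu) => v nv [e be Eu].
  have bk : b (f (v * fnum p)).
    have -> : f (v * fnum p) = u * c * f (fden p) - e * f (fnum p).
      by rewrite rmorphM -mulrA Eq' Eu; ring.
    by apply: bB; [apply: bMr; apply: bMl|apply: bMr].
  case: (kill_lemma Hm HLC bc bk) => // -[s ns E].
  exists (f (s * v) * u * f (fden p)).
    apply: Sm_mul => //; [apply: Sm_mul => //|exact: Sm_f].
    by apply: Sm_f => /(max_prime Hm) [].
  transitivity (f (s * v) * (u * (c * f (fden p)))); first ring.
  rewrite Eq'; transitivity (u * f (s * (v * fnum p))); first by rewrite !rmorphM; ring.
  by rewrite E rmorph0 mulr0.
- have [k [bk Hk]] : exists k, b (f k) /\ forall s, ~ m s -> s * k <> 0.
    apply: contra_notP Hnz => H; move=> y0; apply: (ideal_min (J := fun y => y = 0)).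
      split => //; first by move=> x y -> ->; rewrite addr0.
      by move=> a x ->; rewrite mulr0.
    move=> y [k bk ->]; apply/locmap_eq0.
    apply: contra_notP H => H; exists k; split => // s ns sk.
    by apply: H; exists s => //; apply: Smc_sub.
  by case: (kill_lemma Hm HLC bc bk) => // -[s ns E]; case: (Hk s ns).
Qed.
End Main.

Section Main2.
Variables (A B : comPzRingType) (f : {rmorphism A -> B}) (b : ideal_of B).
Local Notation R := (amalgamation f b).

Lemma R_eq2 (x y : R) : (val x).1 = (val y).1 -> (val x).2 = (val y).2 -> x = y.
Proof. by move=> E1 E2; apply: val_inj; move: E1 E2; case: (val x) => ? ?; case: (val y) => ? ? /= -> ->. Qed.

Lemma ii_LC :
  (forall m : A -> Prop, maximal_ideal m -> LCm m) ->
  (forall m : A -> Prop, maximal_ideal m -> (forall a, b (f a) -> m a) ->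
          forall y : localization (Sm f b m), ext_ideal (Sm f b m) b y -> y = 0) ->
  (forall n : B -> Prop, maximal_ideal n -> ~ (forall y, b y -> n y) -> LCm n) ->
  forall M : R -> Prop, maximal_ideal M -> LCm M.
Proof.
move=> HA Hb HB M HM X Y.
case: (pselect (forall c (H : b c), M (mkb f H))) => H0.
- pose mA := fun a => exists2 X, M X & (val X).1 = a.
  have HmA : maximal_ideal mA := max_downA HM H0.
  have notM (Z : R) : ~ mA (val Z).1 -> ~ M Z by move=> H MZ; apply: H; exists Z.
  suff one : forall X Y : R, (exists t r, ~ mA t /\ t * (val X).1 = r * (val Y).1) ->
      exists t r, ~ M t /\ t * X = r * Y.
    case: (HA mA HmA (val X).1 (val Y).1) => H; [left|right]; exact: one.
  move=> {}X {}Y [s [r1 [ns E]]].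
  case: (pselect (forall a, b (f a) -> mA a)) => Hsub.
  + have kill (c : B) : b c -> exists v e, [/\ ~ mA v, b e & (f v + e) * c = 0].
      move=> bc.
      have /locmap_eq0 [u /(Smc_Sm HmA) [v nv [e be ->]] Eu] :
          locmap (Sm f b mA) c = 0.
        by apply: (Hb mA HmA Hsub); apply: ideal_gen_sub; exists c.
      by exists v, e.
    have [vX [eX [nvX beX KX]]] := kill _ (memA X).
    have [vY [eY [nvY beY KY]]] := kill _ (memA Y).
    set uX := f vX + eX in KX; set uY := f vY + eY in KY.
    have bS : forall s, b (f s * uX * uY - f (s * vX * vY)).
      move=> s'; rewrite !rmorphM.
      have -> : f s' * uX * uY - f s' * f vX * f vY =
          f s' * (eX * f vY + f vX * eY + eX * eY) by rewrite /uX /uY; ring.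
      by apply: bMl; apply: bD; [apply: bD|]; [apply: bMr|apply: bMl|apply: bMr].
    exists (mkA (bS s)), (mkA (bS r1)); split.
      apply: notM; rewrite mkA_val /=.
      by move=> /(max_prime HmA) [/(max_prime HmA) []|].
    have KX' : uX * (val X).2 = uX * f (val X).1.
      by apply/eqP; rewrite -subr_eq0 -mulrBr KX.
    have KY' : uY * (val Y).2 = uY * f (val Y).1.
      by apply/eqP; rewrite -subr_eq0 -mulrBr KY.
    apply: R_eq2 => /=.
      by transitivity (s * (val X).1 * (vX * vY)); [ring|rewrite E; ring].
    transitivity (f s * uY * (uX * (val X).2)); first ring.
    rewrite KX'; transitivity (uX * uY * f (s * (val X).1)); first by rewrite rmorphM; ring.
    rewrite E rmorphM; transitivity (f r1 * uX * (uY * f (val Y).1)); first ring.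
    by rewrite -KY'; ring.
  + have [a0 [ba0 na0]] : exists a0, b (f a0) /\ ~ mA a0.
      apply: contra_notP Hsub => H a ba; apply: contra_notP H => na; by exists a.
    have bS s2 : b (0 - f (s2 * a0)) by apply: b0f; rewrite rmorphM; apply: bMl.
    exists (mkA (bS s)), (mkA (bS r1)); split.
      apply: notM; rewrite mkA_val /=.
      by move=> /(max_prime HmA) [].
    apply: R_eq2 => /=; last by rewrite !mul0r.
    by transitivity (s * (val X).1 * a0); [ring|rewrite E; ring].
- have [c0 [H0' nC]] : exists c0 (H : b c0), ~ M (mkb f H).
    apply: contra_notP H0 => H c bc; apply: contra_notP H => nc; by exists c, bc.
  have [HnB nBc0] := max_downB HM nC.
  set nB := fun z => _ in HnB.
  have Hnb : ~ (forall y, b y -> nB y).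
    by move=> H; apply: nBc0; apply: H.
  have bc z : b (c0 * z) by apply: bMr.
  suff one : forall X Y : R, (exists t r, ~ nB t /\ t * (val X).2 = r * (val Y).2) ->
      exists t r, ~ M t /\ t * X = r * Y.
    case: (HB nB HnB Hnb (val X).2 (val Y).2) => H; [left|right]; exact: one.
  move=> {}X {}Y [s [r [ns E]]].
  exists (mkb f (bc (c0 * s))), (mkb f (bc (c0 * r))); split.
    move=> MS; have : nB (c0 * s) by exists (mkb f (bc (c0 * s))); rewrite ?mkA_val.
    by move=> /(max_prime HnB) [].
  apply: R_eq2 => /=; first by rewrite !mul0r.
  by rewrite -!mulrA E.
Qed.
End Main2.

Unset Implicit Arguments.
Theorem proposition4p10 (A B : comPzRingType) (f : {rmorphism A -> B})
    (b : ideal_of B) :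
  (forall m : A -> Prop, maximal_ideal m -> (forall a, b (f a) -> m a) ->
     (forall y : localization (Sm f b m),
        exists x : localization (compl m), locind f (compl m) (Sm f b m) x = y)
     \/ ~ (forall y : localization (compl m),
             ext_ideal (compl m) (fun a => b (f a)) y -> y = 0)) ->
  (arithmetical (amalgamation f b) <->
   [/\ arithmetical A,
       (forall m : A -> Prop, maximal_ideal m -> (forall a, b (f a) -> m a) ->
          forall y : localization (Sm f b m), ext_ideal (Sm f b m) b y -> y = 0)
     & (forall n : B -> Prop, maximal_ideal n -> ~ (forall y, b y -> n y) ->
          forall I J : localization (compl n) -> Prop, is_ideal I -> is_ideal J ->
            (forall x, I x -> J x) \/ (forall x, J x -> I x))]).
Proof.
move=> Hyp; split.
- move=> HR; have LCR := arith_LC HR; split.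
  + exact: LC_arith (i_A LCR).
  + by move=> m Hm Hsub; apply: i_bS => //; apply: Hyp.
  + move=> n Hn Hnb; apply: (proj2 (chained_LC Hn)); exact: (i_B LCR Hn Hnb).
- case=> HA Hb Hc; apply: LC_arith; apply: ii_LC => //.
  + exact: arith_LC.
  + by move=> n Hn Hnb; apply: (proj1 (chained_LC Hn)); apply: Hc.
Qed.
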